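(* Let $n\ge 2$ and let $U$ be the transition matrix of the Grover walk on the complete graph $K_n$. Then there is a real scalar $t$ such that $U^2=\exp\big(t\,S(\mathrm{LD}(K_n))\big)$.
   Context: For a $k$-regular graph $X$, each edge $\{a,b\}$ is replaced by arcs $(a,b)$ and $(b,a)$. The line digraph $\mathrm{LD}(X)$ has the arcs as vertices, with an arc from $(a,b)$ to $(c,d)$ iff $b=c$; $A(\mathrm{LD}(X))$ is its $01$-adjacency matrix. $R$ is the permutation matrix on arcs mapping $(a,b)$ to $(b,a)$. The transition matrix of the Grover walk is $U=\frac{2}{k}A(\mathrm{LD}(X))-R$ (here $k=n-1$). For a digraph $Z$ with $01$-adjacency matrix $A(Z)$, its skew-adjacency matrix is $S(Z)=A(Z)-A(Z)^T$. *)

(* Defs.v *)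
From HB Require Import structures.
From mathcomp Require Import all_boot all_order all_algebra.
From mathcomp Require Import all_classical all_reals all_analysis.
Set Implicit Arguments. Unset Strict Implicit. Unset Printing Implicit Defensive.
Import Order.TTheory GRing.Theory Num.Theory.
Import numFieldNormedType.Exports.
Local Open Scope classical_set_scope.
Local Open Scope ring_scope.

Definition arc (n : nat) := {p : 'I_n * 'I_n | p.1 != p.2}.

(* Number of arcs; matrices on arcs are indexed by 'I_(narcs n) via enum_val. *)
Definition narcs (n : nat) : nat := #|{: arc n}|.

Definition arc_of (n : nat) (i : 'I_(narcs n)) : 'I_n * 'I_n :=
  val (@enum_val (arc n) _ i).

(* 01-adjacency matrix of the line digraph LD(K_n): (a,b) -> (c,d) iff b = c *)
Definition LDadj (R : nzRingType) (n : nat) : 'M[R]_(narcs n) :=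
  \matrix_(i, j) ((arc_of i).2 == (arc_of j).1)%:R.

Definition revmx (R : nzRingType) (n : nat) : 'M[R]_(narcs n) :=
  \matrix_(i, j) (arc_of j == ((arc_of i).2, (arc_of i).1))%:R.

(* Grover walk transition matrix on K_n, with k = n - 1 *)
Definition grover (R : fieldType) (n : nat) : 'M[R]_(narcs n) :=
  (2 / (n.-1)%:R) *: LDadj R n - revmx R n.

Definition skewLD (R : nzRingType) (n : nat) : 'M[R]_(narcs n) :=
  LDadj R n - (LDadj R n)^T.

Definition is_mxexp (R : realType) (m : nat) (M E : 'M[R]_m) : Prop :=
  forall i j,
    (fun N : nat => (\sum_(k < N) (k`!%:R)^-1 *: M ^+ k) i j) @ \oo --> E i j.

(* Main.v *)
Require Import Defs.
From HB Require Import structures.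
From mathcomp Require Import all_boot all_order all_algebra.
From mathcomp Require Import all_classical all_reals all_analysis.
From mathcomp Require Import ring lra.
Import Order.TTheory GRing.Theory Num.Theory.
Import numFieldNormedType.Exports.
Local Open Scope classical_set_scope.
Local Open Scope ring_scope.

Lemma sum_arcs (R : nzRingType) n (G : 'I_n * 'I_n -> R) :
  \sum_(i < narcs n) G (arc_of i) = \sum_(p : 'I_n * 'I_n | p.1 != p.2) G p.
Proof.
rewrite /arc_of /narcs -(big_enum_val (fun x : Defs.arc n => G (val x))).
rewrite (reindex_omap (val : Defs.arc n -> _) insub); last first.
  by move=> p Hp; rewrite insubT.
apply: eq_bigl => -[p Hp] /=. by rewrite insubT /= eqxx Hp.
Qed.

Lemma sum_arcs2 (R : nzRingType) n (G : 'I_n -> 'I_n -> R) :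
  \sum_(i < narcs n) G (arc_of i).1 (arc_of i).2 =
  \sum_p \sum_q (p != q)%:R * G p q.
Proof.
rewrite (@sum_arcs _ _ (fun p => G p.1 p.2)) pair_bigA /= big_mkcond /=.
by apply: eq_bigr => p _; case: (p.1 != p.2); rewrite ?mul1r ?mul0r.
Qed.

Lemma arcP n (i : 'I_(narcs n)) : (arc_of i).1 != (arc_of i).2.
Proof. exact: (valP (enum_val i)). Qed.

Lemma arc_of_inj n : injective (@arc_of n).
Proof. by move=> i j /val_inj /enum_val_inj. Qed.

Lemma sumD (R : comNzRingType) n (u : 'I_n) (f : 'I_n -> R) :
  \sum_p (p == u)%:R * f p = f u.
Proof.
rewrite (bigD1 u) //= eqxx mul1r big1 ?addr0 // => p /negbTE ->.
by rewrite mul0r.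
Qed.

Lemma sumN (R : comNzRingType) n (u : 'I_n) :
  \sum_q (u != q)%:R = (n.-1)%:R :> R.
Proof.
rewrite (bigD1 u) //= eqxx add0r.
rewrite (eq_bigr (fun _ => 1)); last by move=> q; rewrite eq_sym => ->.
by rewrite sumr_const cardC1 card_ord.
Qed.

Lemma sum2D (R : comNzRingType) n (u v : 'I_n) :
  \sum_p \sum_q (p != q)%:R * ((p == u)%:R * (q == v)%:R) = (u != v)%:R :> R.
Proof.
under eq_bigr => p _. under eq_bigr => q _ do rewrite mulrCA. over.
under eq_bigr do rewrite -mulr_sumr.
rewrite sumD.
under eq_bigr do rewrite mulrC.
by rewrite sumD.
Qed.

Lemma sum1D (R : comNzRingType) n (u : 'I_n) :
  \sum_p \sum_q (p != q)%:R * (p == u)%:R = (n.-1)%:R :> R.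
Proof.
under eq_bigr => p _. under eq_bigr => q _ do rewrite mulrC. over.
under eq_bigr do rewrite -mulr_sumr.
by rewrite sumD sumN.
Qed.

Lemma sum1D' (R : comNzRingType) n (u : 'I_n) :
  \sum_p \sum_q (p != q)%:R * (q == u)%:R = (n.-1)%:R :> R.
Proof.
rewrite exchange_big /=.
under eq_bigr => p _. under eq_bigr => q _ do rewrite eq_sym mulrC. over.
under eq_bigr do rewrite -mulr_sumr.
by rewrite sumD sumN.
Qed.

Lemma natr_neq (R : nzRingType) (T : eqType) (x y : T) :
  (x != y)%:R = 1 - (x == y)%:R :> R.
Proof. by case: (x == y); rewrite ?subrr ?subr0. Qed.

Lemma natr_and (R : nzRingType) (a b : bool) : (a && b)%:R = a%:R * b%:R :> R.
Proof. by case: a; case: b; rewrite ?mul1r ?mul0r. Qed.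

Lemma dd1 (R : nzRingType) (T : eqType) (x y z : T) :
  (x == z)%:R * (y == z)%:R = (x == y)%:R * (z == x)%:R :> R.
Proof.
have [->|h] := eqVneq z x; first by rewrite /= mulr1 mul1r eq_sym.
by rewrite /= mulr0 mul0r.
Qed.

Definition Pm (R : nzRingType) n : 'M[R]_(narcs n) :=
  \matrix_(i, j) ((arc_of i).2 == (arc_of j).2)%:R.
Definition Qm (R : nzRingType) n : 'M[R]_(narcs n) :=
  \matrix_(i, j) ((arc_of i).1 == (arc_of j).1)%:R.
Definition Jm (R : nzRingType) n : 'M[R]_(narcs n) := const_mx 1.

Ltac gen := match goal with i : 'I_(narcs _), j : 'I_(narcs _) |- _ =>
  move: (@arcP _ i) (@arcP _ j); case: (arc_of i) => a b; case: (arc_of j) => c d /= hab hcd end.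

Ltac ent := apply/matrixP => i j; rewrite /LDadj /revmx /Pm /Qm /Jm !mxE;
  under eq_bigr do rewrite !mxE.

Notation kk n := ((n.-1)%:R).

Lemma XX (R : comNzRingType) n : LDadj R n *m LDadj R n = Jm R n - LDadj R n.
Proof.
ent. rewrite (@sum_arcs2 _ _ (fun p q => ((arc_of i).2 == p)%:R * (q == (arc_of j).1)%:R)); gen.
under eq_bigr => p _. under eq_bigr => q _ do rewrite (eq_sym b p). over.
by rewrite sum2D natr_neq.
Qed.

Lemma XY (R : comNzRingType) n : LDadj R n *m (LDadj R n)^T = kk n *: Pm R n.
Proof.
ent. rewrite (@sum_arcs2 _ _ (fun p q => ((arc_of i).2 == p)%:R * ((arc_of j).2 == p)%:R)); gen.
transitivity ((b == d)%:R * \sum_p \sum_q (p != q)%:R * (p == b)%:R :> R).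
  rewrite mulr_sumr; apply: eq_bigr => p _; rewrite mulr_sumr; apply: eq_bigr => q _.
  rewrite dd1; ring.
by rewrite sum1D mulrC.
Qed.

Lemma YX (R : comNzRingType) n : (LDadj R n)^T *m LDadj R n = kk n *: Qm R n.
Proof.
ent. rewrite (@sum_arcs2 _ _ (fun p q => (q == (arc_of i).1)%:R * (q == (arc_of j).1)%:R)); gen.
transitivity ((a == c)%:R * \sum_p \sum_q (p != q)%:R * (q == a)%:R :> R).
  rewrite mulr_sumr; apply: eq_bigr => p _; rewrite mulr_sumr; apply: eq_bigr => q _.
  rewrite [in LHS](eq_sym q a) [in LHS](eq_sym q c) [in LHS]dd1; ring.
by rewrite sum1D' mulrC.
Qed.

Lemma YY (R : comNzRingType) n : (LDadj R n)^T *m (LDadj R n)^T = Jm R n - (LDadj R n)^T.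
Proof.
ent. rewrite (@sum_arcs2 _ _ (fun p q => (q == (arc_of i).1)%:R * ((arc_of j).2 == p)%:R)); gen.
transitivity (\sum_p \sum_q (p != q)%:R * ((p == d)%:R * (q == a)%:R) :> R).
  apply: eq_bigr => p _; apply: eq_bigr => q _.
  rewrite [in LHS](eq_sym d p); ring.
by rewrite sum2D natr_neq.
Qed.

Lemma XJ (R : comNzRingType) n : LDadj R n *m Jm R n = kk n *: Jm R n.
Proof.
ent. rewrite (@sum_arcs2 _ _ (fun p q => ((arc_of i).2 == p)%:R * 1)); gen.
transitivity (\sum_p \sum_q (p != q)%:R * (p == b)%:R :> R).
  apply: eq_bigr => p _; apply: eq_bigr => q _.
  rewrite [in LHS](eq_sym b p); ring.
by rewrite sum1D mulr1.
Qed.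

Lemma YJ (R : comNzRingType) n : (LDadj R n)^T *m Jm R n = kk n *: Jm R n.
Proof.
ent. rewrite (@sum_arcs2 _ _ (fun p q => (q == (arc_of i).1)%:R * 1)); gen.
transitivity (\sum_p \sum_q (p != q)%:R * (q == a)%:R :> R).
  apply: eq_bigr => p _; apply: eq_bigr => q _.
  ring.
by rewrite sum1D' mulr1.
Qed.

Lemma XP (R : comNzRingType) n : LDadj R n *m Pm R n = Jm R n - Pm R n.
Proof.
ent. rewrite (@sum_arcs2 _ _ (fun p q => ((arc_of i).2 == p)%:R * (q == (arc_of j).2)%:R)); gen.
transitivity (\sum_p \sum_q (p != q)%:R * ((p == b)%:R * (q == d)%:R) :> R).
  apply: eq_bigr => p _; apply: eq_bigr => q _.
  rewrite [in LHS](eq_sym b p); ring.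
by rewrite sum2D natr_neq.
Qed.

Lemma XQ (R : comNzRingType) n : LDadj R n *m Qm R n = kk n *: LDadj R n.
Proof.
ent. rewrite (@sum_arcs2 _ _ (fun p q => ((arc_of i).2 == p)%:R * (p == (arc_of j).1)%:R)); gen.
transitivity ((b == c)%:R * \sum_p \sum_q (p != q)%:R * (p == b)%:R :> R).
  rewrite mulr_sumr; apply: eq_bigr => p _; rewrite mulr_sumr; apply: eq_bigr => q _.
  rewrite [in LHS](eq_sym p c) dd1; ring.
by rewrite sum1D mulrC.
Qed.

Lemma YP (R : comNzRingType) n : (LDadj R n)^T *m Pm R n = kk n *: (LDadj R n)^T.
Proof.
ent. rewrite (@sum_arcs2 _ _ (fun p q => (q == (arc_of i).1)%:R * (q == (arc_of j).2)%:R)); gen.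
transitivity ((d == a)%:R * \sum_p \sum_q (p != q)%:R * (q == a)%:R :> R).
  rewrite mulr_sumr; apply: eq_bigr => p _; rewrite mulr_sumr; apply: eq_bigr => q _.
  rewrite [in LHS](eq_sym q a) (eq_sym q d) dd1 (eq_sym a d); ring.
by rewrite sum1D' mulrC.
Qed.

Lemma YQ (R : comNzRingType) n : (LDadj R n)^T *m Qm R n = Jm R n - Qm R n.
Proof.
ent. rewrite (@sum_arcs2 _ _ (fun p q => (q == (arc_of i).1)%:R * (p == (arc_of j).1)%:R)); gen.
transitivity (\sum_p \sum_q (p != q)%:R * ((p == c)%:R * (q == a)%:R) :> R).
  apply: eq_bigr => p _; apply: eq_bigr => q _.
  ring.
by rewrite sum2D natr_neq eq_sym.
Qed.

Lemma XR (R : comNzRingType) n : LDadj R n *m revmx R n = Pm R n.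
Proof.
ent. rewrite (@sum_arcs2 _ _ (fun p q => ((arc_of i).2 == p)%:R * (arc_of j == (q, p))%:R)); gen.
transitivity (\sum_p (p == b)%:R * \sum_q (p != q)%:R * ((q == c)%:R * (d == p)%:R) :> R).
  apply: eq_bigr => p _; rewrite mulr_sumr; apply: eq_bigr => q _.
  rewrite xpair_eqE natr_and (eq_sym b p) (eq_sym c q); ring.
rewrite sumD.
transitivity (\sum_q (q == c)%:R * ((b != q)%:R * (d == b)%:R) :> R).
  apply: eq_bigr => q _; ring.
rewrite sumD. case: (eqVneq b d) => [E|h] /=.
  by subst d; rewrite (eq_sym b c) hcd mulr1.
by rewrite mulr0.
Qed.

Lemma RX (R : comNzRingType) n : revmx R n *m LDadj R n = Qm R n.
Proof.
ent. rewrite (@sum_arcs2 _ _ (fun p q => ((p, q) == ((arc_of i).2, (arc_of i).1))%:R * (q == (arc_of j).1)%:R)); gen.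
transitivity (\sum_p (p == b)%:R * \sum_q (p != q)%:R * ((q == a)%:R * (q == c)%:R) :> R).
  apply: eq_bigr => p _; rewrite mulr_sumr; apply: eq_bigr => q _.
  rewrite xpair_eqE natr_and; ring.
rewrite sumD.
transitivity (\sum_q (q == a)%:R * ((b != q)%:R * (a == c)%:R) :> R).
  apply: eq_bigr => q _. have [->|h] := eqVneq q a; first by ring.
  rewrite /=; ring.
rewrite sumD eq_sym (negbTE hab) /=. ring.
Qed.

Lemma RR (R : comNzRingType) n : revmx R n *m revmx R n = 1%:M.
Proof.
ent. rewrite -(inj_eq (@arc_of_inj n)).
rewrite (@sum_arcs2 _ _ (fun p q => ((p, q) == ((arc_of i).2, (arc_of i).1))%:R * (arc_of j == (q, p))%:R)); gen.
transitivity (\sum_p (p == b)%:R * \sum_q (p != q)%:R * ((q == a)%:R * ((c == q)%:R * (d == p)%:R)) :> R).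
  apply: eq_bigr => p _; rewrite mulr_sumr; apply: eq_bigr => q _.
  rewrite !xpair_eqE !natr_and; ring.
rewrite sumD.
transitivity (\sum_q (q == a)%:R * ((b != q)%:R * ((c == a)%:R * (d == b)%:R)) :> R).
  apply: eq_bigr => q _. have [->|h] := eqVneq q a; first by ring.
  rewrite /=; ring.
rewrite sumD eq_sym (negbTE hab) xpair_eqE natr_and (eq_sym a c) (eq_sym b d) /=. ring.
Qed.

Lemma S2 (R : comNzRingType) n : skewLD R n *m skewLD R n =
  (Jm R n - LDadj R n) - kk n *: Pm R n - kk n *: Qm R n + (Jm R n - (LDadj R n)^T).
Proof.
rewrite /skewLD mulmxBl !mulmxBr XX XY YX YY.
apply/matrixP => i j; rewrite !mxE; ring.
Qed.

Lemma S3 (R : comNzRingType) n : skewLD R n *m (skewLD R n *m skewLD R n) =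
  (1 - kk n ^+ 2) *: skewLD R n.
Proof.
rewrite S2 {1}/skewLD.
rewrite !(mulmxBl, mulmxBr, mulmxDl, mulmxDr, mulmxN, mulNmx) -!scalemxAr.
rewrite XJ YJ XX YX XY YY XP YP XQ YQ /skewLD.
apply/matrixP => i j; rewrite !mxE; ring.
Qed.

Lemma kk_neq0 (R : realType) n : (2 <= n)%N -> kk n != 0 :> R.
Proof. by move=> hn; rewrite pnatr_eq0; case: n hn => [|[|m]]. Qed.

Lemma kk_ge1 (R : realType) n : (2 <= n)%N -> 1 <= kk n :> R.
Proof. by move=> hn; rewrite ler1n; case: n hn => [|[|m]]. Qed.

Lemma U2 (R : realType) n : (2 <= n)%N ->
  grover R n ^+ 2 = 1%:M - (2 / kk n ^+ 2) *: skewLD R n +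
     (2 / kk n ^+ 2) *: (skewLD R n *m skewLD R n).
Proof.
move=> hn.
have hk : kk n != 0 :> R by exact: kk_neq0.
rewrite S2 expr2 -mulmxE /grover.
rewrite !(mulmxBl, mulmxBr) -!scalemxAl -!scalemxAr XX XR RX RR /skewLD.
apply/matrixP => i j; rewrite !mxE. field. exact: hk.
Qed.

Lemma powS (R : comNzRingType) N (S : 'M[R]_N) c :
  S *m (S *m S) = c *: S ->
  forall m, S ^+ m.*2.+1 = c ^+ m *: S /\ S ^+ m.*2.+2 = c ^+ m *: (S *m S).
Proof.
move=> h; elim => [|m [IH1 IH2]].
  by rewrite expr1 expr2 !expr0 !scale1r mulmxE.
have e1 : S ^+ (m.+1).*2.+1 = S * (S * S ^+ m.*2.+1) by rewrite doubleS !exprS.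
have e2 : S ^+ (m.+1).*2.+2 = S * (S * S ^+ m.*2.+2) by rewrite doubleS !exprS.
rewrite e1 e2 IH1 IH2 -!mulmxE -!scalemxAr h scalerA -exprSr; split=> //.
by rewrite -scalemxAr scalerA -exprSr.
Qed.

Lemma exprZmx (R : comNzRingType) N (S : 'M[R]_N) t k : (t *: S) ^+ k = t ^+ k *: S ^+ k.
Proof.
elim: k => [|k IH]; first by rewrite !expr0 scale1r.
by rewrite !exprS IH -!mulmxE -scalemxAl -scalemxAr scalerA.
Qed.

Lemma test2 (R : realType) (x : R) : series (cos_coeff x) @ \oo --> cos x.
Proof. rewrite unlock. exact: is_cvg_series_cos_coeff. Qed.

Lemma nat_dec k : k = 0%N \/ (exists m, k = m.*2.+1) \/ (exists m, k = m.*2.+2).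
Proof.
case: k => [|k]; [by left|right].
have e := odd_double_half k.
case: (odd k) e => /= e.
  by right; exists k./2; rewrite -{1}e add1n.
by left; exists k./2; rewrite -{1}e add0n.
Qed.

Lemma term_eq (R : realType) N (S : 'M[R]_N) c (cp : 0 < c)
  (h : S *m (S *m S) = (- c) *: S) th i j k :
  (k`!%:R)^-1 * ((th / Num.sqrt c) ^+ k * (S ^+ k) i j) =
  (k == 0)%N%:R * ((1%:M : 'M[R]_N) i j + (S *m S) i j / c)
  + cos_coeff th k * (- (S *m S) i j / c) + sin_coeff th k * (S i j / Num.sqrt c).
Proof.
have hp := @powS _ _ _ _ h.
set om := Num.sqrt c.
have om0 : om != 0 by rewrite /om gt_eqF // sqrtr_gt0.
have omc : om ^+ 2 = c by rewrite /om sqr_sqrtr // ltW.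
have c0 : c != 0 by rewrite gt_eqF.
have f0 : forall k, (k`!%:R : R) != 0 by move=> l; rewrite pnatr_eq0 -lt0n fact_gt0.
case: (nat_dec k) => [->|[[m ->]|[m ->]]].
- have -> : cos_coeff th 0 = 1.
    change (cos_coeff th (0.*2) = 1).
    by rewrite -cos_coeff'E /cos_coeff' -exprnP !expr0 mul1r divr1.
  rewrite (_ : sin_coeff th 0 = 0); last exact: (sin_coeff_even 0).
  rewrite /= !expr0 -idmxE invr1 !mul1r.
  field. by rewrite om0 c0.
- have [-> _] := hp m.
  rewrite (_ : (m.*2.+1 == 0)%N = false) // cos_coeff_odd -sin_coeff'E /sin_coeff' -exprnP.
  rewrite mxE expr_div_n [om ^+ _]exprS -mul2n exprM omc.
  rewrite (_ : (- c) ^+ m = (-1) ^+ m * c ^+ m); last by rewrite -exprMn mulN1r.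
  rewrite mulr0n mul0r add0r.
  set X := c ^+ m. have X0 : X != 0 by rewrite expf_neq0.
  set T := th ^+ _. set F := (_`!)%:R. set Y := (-1) ^+ m.
  have F0 : F != 0 by exact: f0.
  field. by rewrite F0 om0 X0 c0.
- have [_ ->] := hp m.
  rewrite (_ : (m.*2.+2 == 0)%N = false) // -doubleS sin_coeff_even -cos_coeff'E /cos_coeff' -exprnP.
  rewrite mxE expr_div_n -mul2n [om ^+ _]exprM omc.
  rewrite (_ : (- c) ^+ m = (-1) ^+ m * c ^+ m); last by rewrite -exprMn mulN1r.
  rewrite mulr0n mul0r add0r !exprS.
  set X := c ^+ m. have X0 : X != 0 by rewrite expf_neq0.
  set T := th ^+ _. set F := (_`!)%:R. set Y := (-1) ^+ m.
  have F0 : F != 0 by exact: f0.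
  field. by rewrite om0 c0 f0 X0.
Qed.

Lemma ent3 (R : nzRingType) N (A B C : 'M[R]_N) a b i j :
  (A - a *: B + b *: C) i j = A i j - a * B i j + b * C i j.
Proof. by rewrite !mxE. Qed.

Lemma mulE (R : nzRingType) N (A B : 'M[R]_N) : A * B = A *m B.
Proof. by []. Qed.

Lemma sum_ind0 (R : nzRingType) N : \sum_(k < N) (nat_of_ord k == 0)%N%:R = (0 < N)%N%:R :> R.
Proof.
case: N => [|N]; first by rewrite big_ord0.
by rewrite big_ord_recl /= big1 ?addr0 // => i _.
Qed.

Lemma cvg_cos (R : realType) (x : R) : series (cos_coeff x) @ \oo --> cos x.
Proof. rewrite unlock. exact: is_cvg_series_cos_coeff. Qed.

Lemma cvg_sin (R : realType) (x : R) : series (sin_coeff x) @ \oo --> sin x.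
Proof. rewrite unlock. exact: is_cvg_series_sin_coeff. Qed.

Theorem corollary6p2 (R : realType) (n : nat) (hn : (2 <= n)%N) :
  exists t : R, is_mxexp (t *: skewLD R n) (grover R n ^+ 2).
Proof.
have hk := @kk_neq0 R n hn. have hk1 := @kk_ge1 R n hn.
rewrite (@U2 R n hn).
set S := skewLD R n.
set k := (n.-1)%:R : R.
set bt := 2 / k ^+ 2.
set c := k ^+ 2 - 1.
have hS3 : S *m (S *m S) = (- c) *: S by rewrite /S S3 /c opprB.
have hp := @powS _ _ _ _ hS3.
have hc0 : 0 <= c by rewrite /c subr_ge0 exprn_ege1.
have [c0|cp] : c = 0 \/ 0 < c.
  by move: hc0; rewrite le0r => /orP[/eqP->|->]; [left|right].
- exists (-2) => i j.
  apply: cvg_near_cst. near=> N.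
  have hN : (3 <= N)%N by near: N; exact: nbhs_infty_ge.
  have k2 : k ^+ 2 = 1 by apply/eqP; rewrite -subr_eq0; apply/eqP.
  have bt2 : bt = 2 by rewrite /bt k2 divr1.
  rewrite -(big_mkord xpredT (fun l => (l`!%:R)^-1 *: ((-2) *: S) ^+ l)) (@big_cat_nat _ _ _ 3 0 N _ _ (leq0n 3) hN) /=.
  rewrite [X in _ + X]big1_seq ?addr0; last first.
    move=> l /andP[_]; rewrite mem_index_iota => /andP[h3 _].
    have Sl : S ^+ l = 0.
      case: (nat_dec l) h3 => [->//|[[m ->]|[m ->]]] h3.
        have [-> _] := hp m. rewrite c0 oppr0 expr0n.
        by case: m h3 => [//|m] _; rewrite /= scale0r.
      have [_ ->] := hp m. rewrite c0 oppr0 expr0n.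
      by case: m h3 => [//|m] _; rewrite /= scale0r.
    by rewrite exprZmx Sl !scaler0.
  rewrite big_mkord !big_ord_recr big_ord0 /= !exprZmx !expr0 !expr1 [S ^+ 2]expr2 mulE -idmxE.
  rewrite (_ : (2`!)%:R = 2 :> R) // (_ : (1`!)%:R = 1 :> R) // ?(_ : (0`!)%:R = 1 :> R) //.
  rewrite !mxE bt2. by field.
- set om := Num.sqrt c.
  set x := 1 - bt * c.
  have om0 : om != 0 by rewrite /om gt_eqF // sqrtr_gt0.
  have c0 : c != 0 by rewrite gt_eqF.
  have bt0 : 0 <= bt by rewrite /bt divr_ge0 // exprn_ge0 // (le_trans ler01 hk1).
  have k20 : 0 < k ^+ 2 by rewrite exprn_gt0 // (lt_le_trans ltr01 hk1).
  have bt2 : bt <= 2.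
    rewrite /bt ler_pdivrMr //.
    have : 1 <= k ^+ 2 by rewrite exprn_ege1.
    move: (k ^+ 2) => K hK. lra.
  have btc : bt * c = 2 - bt by rewrite /bt /c; field.
  have xin : x \in `[-1, 1].
    rewrite in_itv /= /x btc; apply/andP; split; lra.
  have ex : 1 - x ^+ 2 = bt ^+ 2 * c.
    rewrite /x /bt /c. field. exact: hk.
  exists (- acos x / om) => i j.
  set th := - acos x.
  have E : forall N, (\sum_(l < N) (l`!%:R)^-1 *: ((th / om) *: S) ^+ l) i j =
      (0 < N)%N%:R * ((1%:M : 'M[R]_(narcs n)) i j + (S *m S) i j / c)
      + series (cos_coeff th) N * (- (S *m S) i j / c)
      + series (sin_coeff th) N * (S i j / om).
    move=> N. rewrite summxE /series /= -sum_ind0 !mulr_suml !big_mkord -!big_split /=.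
    apply: eq_bigr => l _. rewrite mxE exprZmx mxE. exact: term_eq.
  rewrite (eq_cvg _ _ E).
  have -> : (1%:M - bt *: S + bt *: (S *m S)) i j =
     1 * ((1%:M : 'M[R]_(narcs n)) i j + (S *m S) i j / c)
      + cos th * (- (S *m S) i j / c) + sin th * (S i j / om).
    rewrite /th cosN sinN acosK // sin_acos; last by move: xin; rewrite in_itv.
    rewrite ex sqrtrM ?exprn_ge0 // sqrtr_sqr ger0_norm // -/om.
    set s2 := (S *m S) i j. set s1 := S i j. set e1 := (1%:M : 'M[R]_(narcs n)) i j.
    rewrite ent3 -/s1 -/s2 -/e1 /x. field. by rewrite om0 c0.
  apply: cvgD; first apply: cvgD.
  - apply: cvgMl. apply: cvg_near_cst. near=> N.
    have hN : (1 <= N)%N by near: N; exact: nbhs_infty_ge.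
    by rewrite hN.
  - apply: cvgMl. exact: cvg_cos.
  - apply: cvgMl. exact: cvg_sin.
Unshelve. all: by end_near.
Qed.
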